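(* Let $G$ be a weakly-reversible chemical reaction network in $s$ species and let $(\mathcal{E}_G)\subseteq\mathbf{k}[x_1,\dots,x_s]$ ($\mathbf{k}$ a field of characteristic zero) be the ideal generated by its associated event-system. Then $G$ is catalytic if and only if $(\mathcal{E}_G)\subsetneq(\mathcal{E}_G):(x_1x_2\cdots x_s)^\infty$.
   Context: A chemical reaction network (CRN) consists of positive integers $s,n$, a finite directed graph $G$ with vertex set $\{1,\dots,n\}$ and edge set $E(G)$, and an injective labeling of vertex $i$ by a monic monomial $\psi_i=\prod_{j=1}^s x_j^{y_{ij}}$, $y_{ij}\in\mathbb{Z}_{\ge0}$. $G$ is weakly-reversible iff each connected component is strongly connected. The associated event-system $\mathcal{E}_G$ is the set of binomials $\psi_i-\psi_j$, one for each pair $\{i,j\}$ with $(i,j)\in E(G)$ or $(j,i)\in E(G)$. The event-graph $\overline{G}$ has as vertices all monic monomials in $x_1,\dots,x_s$, with an edge $(N\psi_i,N\psi_j)$ for each $(i,j)\in E(G)$ and each monic monomial $N$. A weakly-reversible CRN $G$ is catalytic iff there exist monic monomials $M,N$ that are path-connected in $\overline{G}$ such that $M/\gcd(M,N)$ and $N/\gcd(M,N)$ are not path-connected in $\overline{G}$. For an ideal $I$ and polynomial $f$, the saturation is $I:f^\infty=\{g : f^kg\in I \text{ for some } k>0\}$. *)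

(* Defs.v *)
From HB Require Import structures.
From mathcomp Require Import all_boot all_order all_algebra.
From mathcomp Require Export mpoly.
From Stdlib Require Import Relations.
Set Implicit Arguments. Unset Strict Implicit. Unset Printing Implicit Defensive.
Import Order.TTheory GRing.Theory Num.Theory.
Local Open Scope ring_scope.

(* A CRN on vertices 'I_n: directed edge relation E, vertex labeling psi by
   monic monomials (exponent vectors in 'X_{1..s}); the monomial of vertex i
   is 'X_[psi i]. *)

Definition weakly_reversible (n : nat) (E : rel 'I_n) : Prop :=
  forall i j : 'I_n,
    connect (fun a b => E a b || E b a) i j -> connect E i j.

Definition event_edge (s n : nat) (E : rel 'I_n) (psi : 'I_n -> 'X_{1..s})
    (M M' : 'X_{1..s}) : Prop :=
  exists (i j : 'I_n) (N : 'X_{1..s}),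
    E i j /\ M = (N + psi i)%MM /\ M' = (N + psi j)%MM.

Definition event_connected (s n : nat) (E : rel 'I_n) (psi : 'I_n -> 'X_{1..s})
    : 'X_{1..s} -> 'X_{1..s} -> Prop :=
  clos_refl_trans _ (event_edge E psi).

Definition mnm_gcd (s : nat) (M N : 'X_{1..s}) : 'X_{1..s} :=
  [multinom minn (M i) (N i) | i < s].

Definition catalytic (s n : nat) (E : rel 'I_n) (psi : 'I_n -> 'X_{1..s}) : Prop :=
  exists M N : 'X_{1..s},
    event_connected E psi M N /\
    ~ event_connected E psi (M - mnm_gcd M N)%MM (N - mnm_gcd M N)%MM.

Definition event_ideal (K : fieldType) (s n : nat) (E : rel 'I_n)
    (psi : 'I_n -> 'X_{1..s}) (p : {mpoly K[s]}) : Prop :=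
  exists c : 'I_n -> 'I_n -> {mpoly K[s]},
    p = \sum_(i < n) \sum_(j < n | E i j)
          c i j * ('X_[psi i] - 'X_[psi j]).

Definition saturation (K : fieldType) (s : nat) (I : {mpoly K[s]} -> Prop)
    (f : {mpoly K[s]}) (g : {mpoly K[s]}) : Prop :=
  exists k : nat, (0 < k)%N /\ I (f ^+ k * g).

Definition prod_vars (K : fieldType) (s : nat) : {mpoly K[s]} :=
  \prod_(i < s) 'X_i.

Definition strict_subset (T : Type) (A B : T -> Prop) : Prop :=
  (forall x, A x -> B x) /\ exists x, B x /\ ~ A x.

(* Main.v *)
Require Import Defs.
From HB Require Import structures.
From mathcomp Require Import all_boot all_order all_algebra.
From mathcomp Require Import mpoly.
From mathcomp Require Import zify ring.
From Stdlib Require Import Relations Classical ClassicalEpsilon.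
Set Implicit Arguments. Unset Strict Implicit. Unset Printing Implicit Defensive.
Import Order.TTheory GRing.Theory Num.Theory.
Local Open Scope ring_scope.

Definition decP (P : Prop) : bool := if excluded_middle_informative P then true else false.
Lemma decPP (P : Prop) : reflect P (decP P).
Proof. rewrite /decP; case: excluded_middle_informative => h; by constructor. Qed.

Section S.
Variables (K : fieldType) (s n : nat) (E : rel 'I_n) (psi : 'I_n -> 'X_{1..s}).
Hypothesis hwr : weakly_reversible E.
Local Notation I := (@event_ideal K s n E psi).
Local Notation ec := (event_connected E psi).

Lemma ec_trans a b c : ec a b -> ec b c -> ec a c.
Proof. exact: rt_trans. Qed.

Lemma ec_lift N x y : connect E x y -> ec (N + psi x)%MM (N + psi y)%MM.
Proof.
move=> /connectP[p Hp ->]; elim: p x Hp => [|z p IH] x /=; first by move=> _; exact: rt_refl.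
case/andP=> Exz Hp; apply: (@rt_trans _ _ _ (N + psi z)%MM); last exact: IH.
by apply: rt_step; exists x, z, N.
Qed.

Lemma ec_edge_rev a b : event_edge E psi a b -> ec b a.
Proof.
case=> [i [j [N [Eij [-> ->]]]]]; apply: ec_lift; apply: hwr.
by apply: connect1; rewrite Eij orbT.
Qed.

Lemma ec_sym a b : ec a b -> ec b a.
Proof.
elim=> [x y /ec_edge_rev //|x|x y z _ H1 _ H2]; first exact: rt_refl.
exact: rt_trans H2 H1.
Qed.

Lemma ec_shift u a b : ec a b -> ec (u + a)%MM (u + b)%MM.
Proof.
elim=> [x y [i [j [N [Eij [-> ->]]]]]|x|x y z _ H1 _ H2]; last exact: rt_trans H1 H2; last exact: rt_refl.
apply: rt_step; exists i, j, (u + N)%MM; by rewrite !addmA.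
Qed.

Lemma I0 : I 0.
Proof. exists (fun _ _ => 0); rewrite big1 // => i _; rewrite big1 // => j _; exact: mul0r. Qed.

Lemma ID p q : I p -> I q -> I (p + q).
Proof.
case=> c -> [d ->]; exists (fun i j => c i j + d i j).
rewrite -big_split; apply: eq_bigr => i _; rewrite -big_split; apply: eq_bigr => j _.
by rewrite mulrDl.
Qed.

Lemma IM q p : I p -> I (q * p).
Proof.
case=> c ->; exists (fun i j => q * c i j).
rewrite mulr_sumr; apply: eq_bigr => i _; rewrite mulr_sumr; apply: eq_bigr => j _.
by rewrite mulrA.
Qed.

Lemma IN p : I p -> I (- p).
Proof. by move=> h; rewrite -mulN1r; apply: IM. Qed.

Lemma Isum (T : Type) (r : seq T) (P : pred T) (F : T -> {mpoly K[s]}) :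
  (forall x, P x -> I (F x)) -> I (\sum_(x <- r | P x) F x).
Proof. move=> h; apply: big_ind => //; [exact: I0|exact: ID]. Qed.

Lemma Igen i j : E i j -> I ('X_[psi i] - 'X_[psi j]).
Proof.
move=> Eij; exists (fun a b => ((a == i) && (b == j))%:R).
rewrite (bigD1 i) //= (bigD1 j) //= !eqxx /= mul1r big1 ?addr0.
  rewrite big1 ?addr0 // => a /negbTE ->; rewrite big1 // => b _; by rewrite mul0r.
by move=> b /andP[_ /negbTE ->]; rewrite mul0r.
Qed.

Lemma Ibin a b : ec a b -> I ('X_[a] - 'X_[b]).
Proof.
elim=> [x y [i [j [N [Eij [-> ->]]]]]|x|x y z _ H1 _ H2].
- by rewrite !mpolyXD -mulrBr; apply: IM; apply: Igen.
- by rewrite subrr; apply: I0.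
- have ->: 'X_[x] - 'X_[z] = ('X_[x] - 'X_[y]) + ('X_[y] - 'X_[z]) :> {mpoly K[s]} by rewrite addrA subrK.
  exact: ID.
Qed.

Definition Phi (S : pred 'X_{1..s}) (p : {mpoly K[s]}) := \sum_(m <- msupp p | S m) p@_m.

Lemma Phi_L S p L : uniq L -> {subset msupp p <= L} -> Phi S p = \sum_(m <- L | S m) p@_m.
Proof.
move=> uL sub; rewrite (bigID (fun m => m \in msupp p)) /= [X in _ + X]big1 ?addr0; last first.
  by move=> m /andP[_ Hm]; apply/eqP; rewrite mcoeff_eq0.
rewrite (eq_bigl (fun m => (m \in msupp p) && S m)); last by move=> m; rewrite andbC.
rewrite -big_filter_cond /Phi; apply: perm_big; apply: uniq_perm.
- exact: msupp_uniq.
- exact: filter_uniq.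
move=> m; rewrite mem_filter; case H: (m \in msupp p) => //=; by rewrite sub.
Qed.

Lemma PhiD S p q : Phi S (p + q) = Phi S p + Phi S q.
Proof.
set L := undup (msupp p ++ msupp q ++ msupp (p + q)).
have uL : uniq L by exact: undup_uniq.
rewrite (@Phi_L S (p + q) L) // ?(@Phi_L S p L) // ?(@Phi_L S q L) //.
- by rewrite -big_split; apply: eq_bigr => m _; rewrite mcoeffD.
all: by move=> m Hm; rewrite mem_undup !mem_cat Hm ?orbT.
Qed.

Lemma Phi0 S : Phi S 0 = 0.
Proof. by rewrite /Phi msupp0 big_nil. Qed.

Lemma PhiZ S a p : Phi S (a *: p) = a * Phi S p.
Proof.
rewrite (@Phi_L S (a *: p) (msupp p)) ?msupp_uniq //; last exact: msuppZ_le.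
by rewrite /Phi mulr_sumr; apply: eq_bigr => m _; rewrite mcoeffZ.
Qed.

Lemma PhiN S p : Phi S (- p) = - Phi S p.
Proof. by rewrite -scaleN1r PhiZ mulN1r. Qed.

Lemma PhiB S p q : Phi S (p - q) = Phi S p - Phi S q.
Proof. by rewrite PhiD PhiN. Qed.

Lemma Phi_sum S (T : Type) (r : seq T) (P : pred T) (F : T -> {mpoly K[s]}) :
  Phi S (\sum_(x <- r | P x) F x) = \sum_(x <- r | P x) Phi S (F x).
Proof. exact: (big_morph _ (PhiD S) (Phi0 S)). Qed.

Lemma PhiX S m : Phi S 'X_[m] = (S m)%:R.
Proof. by rewrite /Phi msuppX big_cons big_nil mcoeffX eqxx; case: (S m); rewrite ?addr0 ?add0r. Qed.

Lemma Phi_mulX S u p : Phi S ('X_[u] * p) = \sum_(m <- msupp p) p@_m * (S (u + m)%MM)%:R.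
Proof.
rewrite {1}(mpolyE p) mulr_sumr Phi_sum; apply: eq_bigr => m _.
by rewrite -scalerAr -mpolyXD PhiZ PhiX.
Qed.

Definition comp (a : 'X_{1..s}) : pred 'X_{1..s} := fun m => decP (ec a m).

Lemma PhiI a p : I p -> Phi (comp a) p = 0.
Proof.
case=> c ->; rewrite Phi_sum big1 // => i _; rewrite Phi_sum big1 // => j Eij.
rewrite {1}(mpolyE (c i j)) mulr_suml Phi_sum big1 // => m _.
rewrite -scalerAl mulrBr -!mpolyXD PhiZ PhiB !PhiX.
have -> : comp a (m + psi i)%MM = comp a (m + psi j)%MM.
  have e : event_edge E psi (m + psi i)%MM (m + psi j)%MM by exists i, j, m.
  apply/decPP/decPP => h.
  - exact: ec_trans h (rt_step _ _ _ _ e).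
  - exact: ec_trans h (ec_edge_rev e).
by rewrite subrr mulr0.
Qed.

Lemma comp_refl a : comp a a.
Proof. apply/decPP; exact: rt_refl. Qed.
Lemma comp_sym a b : comp a b = comp b a.
Proof. by apply/decPP/decPP => /ec_sym. Qed.
Lemma comp_trans a b c : comp a b -> comp b c -> comp a c.
Proof. move=> /decPP h1 /decPP h2; apply/decPP; exact: ec_trans h1 h2. Qed.

Lemma zmod_rearr (V : zmodType) (x y A C : V) : x + (A + y + C) = A + C + (x + y).
Proof. by rewrite addrC -!addrA; congr (_ + _); rewrite addrC -!addrA; congr (_ + _); rewrite addrC. Qed.

Lemma char_list (a : 'X_{1..s} -> K) (L : seq 'X_{1..s}) :
  (forall m, m \in L -> \sum_(m' <- L | comp m m') a m' = 0) ->
  I (\sum_(m <- L) a m *: 'X_[m]).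
Proof.
move: {2}(size L) (leqnn (size L)) => k; elim: k L => [|k IH] [|h t] //=; try by move=> _ _; rewrite big_nil; exact: I0.
rewrite ltnS => st H.
have Hh := H h (mem_head _ _); rewrite big_cons comp_refl in Hh.
rewrite big_cons (bigID (comp h)) /=.
have e1 : \sum_(m <- t | comp h m) a m *: 'X_[m] =
   \sum_(m <- t | comp h m) a m *: ('X_[m] - 'X_[h]) + (\sum_(m <- t | comp h m) a m) *: 'X_[h] :> {mpoly K[s]}.
  rewrite scaler_suml -big_split /=. by apply: eq_bigr => m _; rewrite scalerBr -addrA addNr addr0.
rewrite e1 zmod_rearr -scalerDl Hh scale0r addr0; apply: ID.
  apply: Isum => m /decPP hm; rewrite -mul_mpolyC; apply: IM.
  rewrite -opprB; apply: IN; exact: Ibin.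
rewrite -big_filter; apply: IH.
  by rewrite size_filter (leq_trans (count_size _ _)).
move=> m; rewrite mem_filter => /andP[/= hm mt].
rewrite big_filter_cond.
rewrite (eq_bigl (comp m)); last first.
  move=> m' /=; case cm: (comp m m'); rewrite ?andbF ?andbT //.
  apply/negP => hm'; move/negP: hm; apply; apply: comp_trans hm' _; by rewrite comp_sym.
have := H m (mem_behead (s:=h :: t) mt); rewrite big_cons.
suff -> : comp m h = false by [].
by rewrite comp_sym; apply/negbTE.
Qed.

Lemma charI g : (forall m, m \in msupp g -> Phi (comp m) g = 0) -> I g.
Proof. by move=> H; rewrite (mpolyE g); apply: char_list. Qed.

Lemma gcdE (M N : 'X_{1..s}) i : mnm_gcd M N i = minn (M i) (N i).
Proof. by rewrite /mnm_gcd mnmE. Qed.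

Definition kvec (k : nat) : 'X_{1..s} := [multinom k | i < s].

Lemma fpow k : (@prod_vars K s) ^+ k = 'X_[kvec k].
Proof. by rewrite mpolyXE_id /prod_vars -prodrXl; apply: eq_bigr => i _; rewrite /kvec mnmE. Qed.

Lemma sum_mkcond_nat (T : eqType) (r : seq T) (P : pred T) (F : T -> K) :
  \sum_(x <- r | P x) F x = \sum_(x <- r) F x * (P x)%:R.
Proof. by rewrite big_mkcond; apply: eq_bigr => x _; case: (P x); rewrite ?mulr1 ?mulr0. Qed.

End S.

Theorem lemma3p2 (K : fieldType) (hK : [pchar K] =i pred0)
    (s n : nat) (hs : (0 < s)%N) (hn : (0 < n)%N)
    (E : rel 'I_n) (psi : 'I_n -> 'X_{1..s}) (hpsi : injective psi)
    (hwr : weakly_reversible E) :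
  catalytic E psi <->
  strict_subset (@event_ideal K s n E psi)
                (saturation (@event_ideal K s n E psi) (@prod_vars K s)).
Proof.
split.
- case=> [M [N [hMN hn']]]; split.
    by move=> x hx; exists 1%N; split => //; rewrite expr1; apply: IM.
  set G := mnm_gcd M N.
  exists ('X_[M - G] - 'X_[N - G]); split.
    exists (\sum_(i < s) M i).+1; split => //.
    set k := (\sum_(i < s) M i).+1.
    have hk : forall i, (G i <= k - M i + M i - G i + G i)%N /\ (M i < k)%N.
      move=> i; have : (M i <= \sum_(j < s) M j)%N by rewrite (bigD1 i) //= leq_addr.
      rewrite gcdE /k; lia.
    have e1 : (kvec s k + (M - G) = (kvec s k - G) + M)%MM.
      apply/mnmP => i; rewrite !(mnmDE, mnmBE) /kvec mnmE; have := hk i; rewrite /G gcdE; lia.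
    have e2 : (kvec s k + (N - G) = (kvec s k - G) + N)%MM.
      apply/mnmP => i; rewrite !(mnmDE, mnmBE) /kvec mnmE; have := hk i; rewrite /G gcdE; lia.
    rewrite fpow mulrBr -!mpolyXD e1 e2 !mpolyXD -mulrBr; apply: IM; exact: Ibin.
  move=> /(PhiI hwr (M - G)%MM); rewrite PhiB !PhiX comp_refl.
  have -> : comp E psi (M - G)%MM (N - G)%MM = false by apply/negP => /decPP.
  by move/eqP; rewrite subr0 oner_eq0.
- case=> _ [g [[k [k0 Hk]] ng]].
  apply: NNPP => ncat; apply: ng; apply: (charI hwr) => m _.
  set u := kvec s k.
  have := PhiI hwr (u + m)%MM Hk; rewrite fpow Phi_mulX.
  move=> H0; rewrite /Phi (sum_mkcond_nat _ (comp E psi m)) -[X in _ = X]H0; apply: eq_bigr => m' _; congr (_ * _%:R).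
  rewrite -/u /comp; case: decPP => h1; case: decPP => h // ; exfalso.
  + by apply: h; exact: ec_shift.
  + apply: h1.
    have h2 : event_connected E psi (m - mnm_gcd m m')%MM (m' - mnm_gcd m m')%MM.
      have ea : ((u + m) - mnm_gcd (u + m) (u + m') = m - mnm_gcd m m')%MM.
        by apply/mnmP => i; rewrite !(mnmDE, mnmBE, gcdE); lia.
      have eb : ((u + m') - mnm_gcd (u + m) (u + m') = m' - mnm_gcd m m')%MM.
        by apply/mnmP => i; rewrite !(mnmDE, mnmBE, gcdE); lia.
      rewrite -ea -eb; apply: NNPP => hc; apply: ncat; by exists (u + m)%MM, (u + m')%MM.
    have ec1 : (mnm_gcd m m' + (m - mnm_gcd m m') = m)%MM.
      by apply/mnmP => i; rewrite !(mnmDE, mnmBE, gcdE); lia.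
    have ec2 : (mnm_gcd m m' + (m' - mnm_gcd m m') = m')%MM.
      by apply/mnmP => i; rewrite !(mnmDE, mnmBE, gcdE); lia.
    by have := ec_shift (mnm_gcd m m') h2; rewrite ec1 ec2.
Qed.
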